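(* Let $A$ be a bialgebra over a commutative ring $\Bbbk$ with coproduct $\Delta_A$ and counit $\varepsilon$. Identify $\mathrm{Ext}^1_A(\Bbbk,\Bbbk)=HH^1(A,\Bbbk)=\mathrm{Der}(A,\Bbbk)$ and $HH^1(A,A)=\mathrm{Der}(A,A)/\{\text{inner derivations}\}$. Then the inclusion of Lie algebras $\mathrm{Ext}^1_A(\Bbbk,\Bbbk)\hookrightarrow HH^1(A,A)$ (the degree $1$ part of the injective morphism of Gerstenhaber algebras $\mathrm{Ext}^*_A(\Bbbk,\Bbbk)\hookrightarrow HH^*(A,A)$ induced by $lift$) is the composite of Lie algebra morphisms $$\mathrm{Der}(A,\Bbbk)\xrightarrow{i}\mathrm{Der}(A,A)\xrightarrow{q}\mathrm{Der}(A,A)/\{\text{inner derivations}\},$$ where $q$ is the quotient map and $i(f)=(A\otimes f)\circ\Delta_A$.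
   Context: A derivation $f:A\to M$ into an $A$-bimodule satisfies $f(ab)=f(a)b+af(b)$; inner derivations are $a\mapsto am-ma$; $\Bbbk$ is an $A$-bimodule via $\varepsilon$. The injective morphism of Gerstenhaber algebras $\mathrm{Ext}^*_A(\Bbbk,\Bbbk)\hookrightarrow HH^*(A,A)$ is induced by $lift:\mathrm{Hom}(A^{\otimes n},\Bbbk)\to\mathrm{Hom}(A^{\otimes n},A)$, $lift(f)(a_1\otimes\dots\otimes a_n)=a_1^{(1)}\cdots a_n^{(1)}f(a_1^{(2)}\otimes\dots\otimes a_n^{(2)})$, where $\mathrm{Ext}^*_A(\Bbbk,\Bbbk)$ carries the Gerstenhaber structure from the operad with multiplication $\mathcal{O}^A(n)=\mathrm{Hom}(A^{\otimes n},\Bbbk)$ with $(f\circ_ig)(a_1\otimes\dots\otimes a_{m+n-1})=f(a_1\otimes\dots\otimes a_{i-1}\otimes a_i^{(1)}\cdots a_{i+n-1}^{(1)}g(a_i^{(2)}\otimes\dots\otimes a_{i+n-1}^{(2)})\otimes a_{i+n}\otimes\dots)$, identity $\varepsilon$, multiplication $\varepsilon\circ\mu$, $e=\mathrm{id}_\Bbbk$, and $HH^*(A,A)$ carries the usual Gerstenhaber structure from the endomorphism operad $\mathrm{Hom}(A^{\otimes n},A)$. On degree $1$ the Gerstenhaber bracket of an operad with multiplication is $\{f,g\}=f\circ_1g-g\circ_1f$. *)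

(* Defs.v *)
From HB Require Import structures.
From mathcomp Require Import all_boot all_order all_algebra.
Set Implicit Arguments. Unset Strict Implicit. Unset Printing Implicit Defensive.
Import GRing.Theory.
Local Open Scope ring_scope.

(* Tensors are encoded Sweedler-style: an element of A (x) A is represented by
   a finite list of pairs [(x_i, y_i)] standing for sum_i x_i (x) y_i.  Two such
   representatives are equal in A (x) A iff every R-bilinear map into every
   R-module takes the same value on them (universal property); hence all the
   bialgebra axioms that are equalities of tensors are stated through arbitrary
   multilinear maps into arbitrary R-modules. *)

Section Bialg.
Variables (R : comNzRingType) (A : algType R).

Definition linR (M N : lmodType R) (f : M -> N) : Prop :=
  forall (c : R) x y, f (c *: x + y) = c *: f x + f y.

Definition linS (f : A -> R) : Prop :=
  forall (c : R) x y, f (c *: x + y) = c * f x + f y.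

Definition bilinR (M : lmodType R) (phi : A -> A -> M) : Prop :=
  (forall y, linR (fun x => phi x y)) /\ (forall x, linR (phi x)).

Definition trilinR (M : lmodType R) (phi : A -> A -> A -> M) : Prop :=
  (forall y z, linR (fun x => phi x y z)) /\ (forall x z, linR (fun y => phi x y z))
  /\ (forall x y, linR (phi x y)).

Definition tapp (delta : A -> seq (A * A)) (M : lmodType R) (phi : A -> A -> M) (a : A) : M :=
  \sum_(p <- delta a) phi p.1 p.2.

Record is_bialgebra (delta : A -> seq (A * A)) (eps : A -> R) : Prop := {
  delta_lin : forall (M : lmodType R) (phi : A -> A -> M),
      bilinR phi -> linR (tapp delta phi);
  delta_coassoc : forall (M : lmodType R) (phi : A -> A -> A -> M), trilinR phi ->
      forall a, \sum_(p <- delta a) \sum_(q <- delta p.1) phi q.1 q.2 p.2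
              = \sum_(p <- delta a) \sum_(q <- delta p.2) phi p.1 q.1 q.2;
  eps_lin : linS eps;
  counit_l : forall a, \sum_(p <- delta a) eps p.1 *: p.2 = a;
  counit_r : forall a, \sum_(p <- delta a) eps p.2 *: p.1 = a;
  delta_mul : forall (M : lmodType R) (phi : A -> A -> M), bilinR phi ->
      forall a b, tapp delta phi (a * b)
        = \sum_(p <- delta a) \sum_(q <- delta b) phi (p.1 * q.1) (p.2 * q.2);
  delta_one : forall (M : lmodType R) (phi : A -> A -> M), bilinR phi ->
      tapp delta phi 1 = phi 1 1;
  eps_mul : forall a b, eps (a * b) = eps a * eps b;
  eps_one : eps 1 = 1
}.

Definition is_derk (eps : A -> R) (f : A -> R) : Prop :=
  linS f /\ forall a b, f (a * b) = f a * eps b + eps a * f b.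

Definition is_derA (D : A -> A) : Prop :=
  linR D /\ forall a b, D (a * b) = D a * b + a * D b.

Definition is_inner (D : A -> A) : Prop :=
  exists m : A, forall a, D a = a * m - m * a.

Definition lift_deg1 (delta : A -> seq (A * A)) (f : A -> R) (a : A) : A :=
  \sum_(p <- delta a) p.1 * (f p.2)%:A.

Definition imap (delta : A -> seq (A * A)) (f : A -> R) (a : A) : A :=
  \sum_(p <- delta a) f p.2 *: p.1.

Definition compA1 (delta : A -> seq (A * A)) (f g : A -> R) (a : A) : R :=
  f (\sum_(p <- delta a) p.1 * (g p.2)%:A).

Definition brk (delta : A -> seq (A * A)) (f g : A -> R) (a : A) : R :=
  compA1 delta f g a - compA1 delta g f a.

Definition brA (D E : A -> A) (a : A) : A := D (E a) - E (D a).

End Bialg.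

(* Main.v *)
Require Import Defs.
From mathcomp Require Import all_boot all_order all_algebra.
Import GRing.Theory.
Local Open Scope ring_scope.

Section H.
Local Set Implicit Arguments.
Variables (R : comNzRingType) (A : algType R).

Lemma linR0 (M N : lmodType R) (h : M -> N) : linR h -> h 0 = 0.
Proof. move=> H; have := H (-1) 0 0; rewrite scaler0 addr0 scaleN1r addNr //. Qed.
Lemma linRZ (M N : lmodType R) (h : M -> N) c x : linR h -> h (c *: x) = c *: h x.
Proof. move=> H; have := H c x 0; rewrite addr0 (linR0 H) addr0 //. Qed.
Lemma linRD (M N : lmodType R) (h : M -> N) x y : linR h -> h (x + y) = h x + h y.
Proof. move=> H; have := H 1 x y; rewrite !scale1r //. Qed.
Lemma linRB (M N : lmodType R) (h : M -> N) x y : linR h -> h (x - y) = h x - h y.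
Proof. move=> H; rewrite addrC -scaleN1r H scaleN1r addrC //. Qed.
Lemma linR_sum (M N : lmodType R) (h : M -> N) I (s : seq I) (F : I -> M) :
  linR h -> h (\sum_(i <- s) F i) = \sum_(i <- s) h (F i).
Proof.
move=> H; elim: s => [|x s IH]; first by rewrite !big_nil (linR0 H).
by rewrite !big_cons (linRD _ _ H) IH.
Qed.

Lemma linS0 (h : A -> R) : linS h -> h 0 = 0.
Proof. move=> H; have := H (-1) 0 0; rewrite scaler0 addr0 mulN1r addNr //. Qed.
Lemma linSZ (h : A -> R) c x : linS h -> h (c *: x) = c * h x.
Proof. move=> H; have := H c x 0; rewrite addr0 (linS0 H) addr0 //. Qed.
Lemma linSD (h : A -> R) x y : linS h -> h (x + y) = h x + h y.
Proof. move=> H; have := H 1 x y; rewrite scale1r mul1r //. Qed.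
Lemma linSB (h : A -> R) x y : linS h -> h (x - y) = h x - h y.
Proof. move=> H; rewrite addrC -scaleN1r H mulN1r addrC //. Qed.
Lemma linS_sum (h : A -> R) I (s : seq I) (F : I -> A) :
  linS h -> h (\sum_(i <- s) F i) = \sum_(i <- s) h (F i).
Proof.
move=> H; elim: s => [|x s IH]; first by rewrite !big_nil (linS0 H).
by rewrite !big_cons (linSD _ _ H) IH.
Qed.

Lemma my_prod_sums (s t : seq (A * A)) (u v : A * A -> R) :
  \sum_(p <- s) \sum_(q <- t) (u p * v q) *: (p.1 * q.1)
  = (\sum_(p <- s) u p *: p.1) * (\sum_(q <- t) v q *: q.1).
Proof.
rewrite mulr_suml; apply: eq_bigr => p _; rewrite mulr_sumr; apply: eq_bigr => q _.
by rewrite -scalerAl -scalerAr scalerA.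
Qed.
Lemma zfact (V : zmodType) (x y z w : V) : x + y - (z + w) - (x - w) = y - z.
Proof. rewrite opprD opprB (addrC w) addrA -(addrA x y) -(addrA x) (addrC x) addrNK -addrA addrNK //. Qed.
End H.

Theorem mainTheorem4 (R : comNzRingType) (A : algType R)
    (delta : A -> seq (A * A)) (eps : A -> R) :
  is_bialgebra delta eps ->
  (* the degree-1 part of lift is i *)
  (forall f, is_derk eps f -> forall a, lift_deg1 delta f a = imap delta f a)
  (* i : Der(A,k) -> Der(A,A) is well defined *)
  /\ (forall f, is_derk eps f -> is_derA (imap delta f))
  (* i is a Lie algebra morphism *)
  /\ (forall f g, is_derk eps f -> is_derk eps g ->
        forall a, imap delta (brk delta f g) a = brA (imap delta f) (imap delta g) a)
  (* inner derivations form a Lie ideal of Der(A,A), so q is a Lie algebra morphism *)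
  /\ (forall D E : A -> A, is_derA D -> is_inner E -> is_inner (brA D E))
  (* q o i is injective *)
  /\ (forall f, is_derk eps f -> is_inner (imap delta f) -> forall a, f a = 0).
Proof.
move=> B.
have P1 : forall f, is_derk eps f -> forall a, lift_deg1 delta f a = imap delta f a.
  by move=> f _ a; apply: eq_bigr => p _; rewrite mulr_algr.
have Plin : forall f, linS f -> linR (imap delta f).
  move=> f Hf; apply: (delta_lin B (phi := fun x y => f y *: x)); split.
  - by move=> y c x z; rewrite scalerDr scalerA mulrC -scalerA.
  - by move=> x c y z; rewrite Hf scalerDl scalerA.
have P2 : forall f, is_derk eps f -> is_derA (imap delta f).
  move=> f [Hf Hd]; split; first exact: Plin.
  move=> a b.
  have -> : imap delta f (a * b) = tapp delta (fun x y => f y *: x) (a * b) by [].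
  rewrite (delta_mul B); last first.
    split.
    - by move=> y c x z; rewrite scalerDr scalerA mulrC -scalerA.
    - by move=> x c y z; rewrite Hf scalerDl scalerA.
  under eq_bigr => p _ do under eq_bigr => q _ do rewrite Hd scalerDl.
  under eq_bigr => p _ do rewrite big_split.
  rewrite big_split /= (my_prod_sums _ _ _ (fun p => f p.2) (fun q => eps q.2)).
  rewrite (my_prod_sums _ _ _ (fun p => eps p.2) (fun q => f q.2)).
  by rewrite (counit_r B) (counit_r B).
split=> //; split=> //; split.
  move=> f g [Hf Hfd] [Hg Hgd] a.
  rewrite /brA /brk.
  have E1 : forall (h k : A -> R), linS h -> linS k ->
      imap delta h (imap delta k a)
      = \sum_(p <- delta a) \sum_(q <- delta p.2) (h q.1 * k q.2) *: p.1.
    move=> h k Hh Hk.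
    rewrite [imap delta k a]/imap (linR_sum _ _ (Plin _ Hh)).
    under eq_bigr => p _ do rewrite (linRZ _ _ (Plin _ Hh)) /imap scaler_sumr.
    have := delta_coassoc B (phi := fun x y z => (h y * k z) *: x).
    move=> <-; first (apply: eq_bigr => p _; apply: eq_bigr => q _; by rewrite scalerA mulrC).
    split; last split.
    - by move=> y z c x w; rewrite scalerDr !scalerA [c * _]mulrC.
    - by move=> x z c y w; rewrite Hh !mulrDl scalerDl scalerA mulrA.
    - by move=> x y c z w; rewrite Hk !mulrDr scalerDl scalerA mulrCA.
  rewrite E1 // E1 // /imap -sumrB.
  apply: eq_bigr => p _.
  rewrite /compA1 -!/(lift_deg1 delta _ _) !P1 // /imap scalerBl !(linS_sum _ _ Hf) !(linS_sum _ _ Hg).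
  rewrite !scaler_suml; congr (_ - _); apply: eq_bigr => i _.
  by rewrite (linSZ _ _ Hf) (mulrC (g i.2)).
  by rewrite (linSZ _ _ Hg) (mulrC (f i.2)).
split.
  move=> D E [HD Hd] [m Hm]; exists (D m) => a.
  rewrite /brA Hm (linRB _ _ HD) !Hd (Hm (D a)).
  exact: zfact.
move=> f [Hf Hd] [m Hm] a.
have : eps (imap delta f a) = f a.
  rewrite /imap (linS_sum _ _ (eps_lin B)).
  rewrite -{2}(counit_l B a) (linS_sum _ _ Hf); apply: eq_bigr => p _.
  by rewrite (linSZ _ _ (eps_lin B)) (linSZ _ _ Hf) mulrC.
by rewrite Hm (linSB _ _ (eps_lin B)) !(eps_mul B) mulrC subrr.
Qed.
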